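(* For every $d \in \{2,3,4,5,8,12,16,24,40\}$, the sequence $\left(\left\lfloor n^4/d \right\rfloor\right)_{n \ge 1}$ is eventually prime-free.
   Context: A sequence $(a_n)_{n\ge 1}$ of positive integers is called eventually prime-free if there exists an index $n_0$ such that $a_n$ is composite for all $n \ge n_0$. (Here, as in the paper, this is understood as: only finitely many terms $a_n$ are prime.) *)

(* Defs.v *)
From mathcomp Require Import all_boot.
Definition eventually_prime_free (a : nat -> nat) : Prop :=
  exists n0 : nat, forall n : nat, n0 <= n -> ~~ prime (a n).

(* Main.v *)
Require Import Defs.
From mathcomp Require Import all_boot.
From mathcomp Require Import zify.

Lemma key d k a b : 0 < d -> d < a -> d < b -> k * d = a * b -> ~~ prime k.
Proof.
move=> d0 da db e; apply/negP => pk.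
have : k %| a * b by rewrite -e dvdn_mulr.
have k0 := prime_gt0 pk.
rewrite Euclid_dvdM // => /orP [] /dvdnP [t ht]; subst.
- have : d = t * b.
    by apply/eqP; rewrite -(eqn_pmul2l k0) e; apply/eqP; nia.
  move=> dt; have t0 : 0 < t by case: t dt d0 da {e} => //; lia.
  have : b <= t * b by rewrite leq_pmull.
  lia.
- have : d = a * t.
    by apply/eqP; rewrite -(eqn_pmul2l k0) e; apply/eqP; nia.
  move=> dt; have t0 : 0 < t by case: t dt d0 db {e} => //; lia.
  have : a <= a * t by rewrite leq_pmulr.
  lia.
Qed.

Definition f4 d i := ((i * i) %% d * ((i * i) %% d)) %% d.

Lemma f4E d n : n ^ 4 %% d = f4 d (n %% d).
Proof.
rewrite /f4 modnMm.
have E : forall m, m * m * (m * m) = m ^ 4 by move=> m; rewrite !expnS expn0 muln1 !mulnA.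
by rewrite E modnXm.
Qed.

Lemma getc d : 0 < d ->
  all (fun i => has (fun c => f4 d i == c * c) (iota 0 6)) (iota 0 d) ->
  forall n, exists c, c <= 5 /\ n ^ 4 %% d = c * c.
Proof.
move=> d0 /allP H n.
have : n %% d \in iota 0 d by rewrite mem_iota /= ltn_mod.
move/H/hasP => [c]; rewrite mem_iota => c6 /eqP e.
by exists c; split; [lia | rewrite f4E].
Qed.

Lemma gen d : 0 < d -> d <= 40 ->
  all (fun i => has (fun c => f4 d i == c * c) (iota 0 6)) (iota 0 d) ->
  eventually_prime_free (fun n => n ^ 4 %/ d).
Proof.
move=> d0 d40 A; exists 7 => n n7.
have [c [c5 e]] := @getc d d0 A n.
have m49 : 49 <= n * n by nia.
apply: (@key d _ (n * n - c) (n * n + c)) => //; try lia.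
Qed.

Theorem theorem3 (d : nat) :
  d \in [:: 2; 3; 4; 5; 8; 12; 16; 24; 40] ->
  eventually_prime_free (fun n => n ^ 4 %/ d).
Proof.
rewrite !inE.
do 8 (case/orP; [move/eqP->; apply: gen => //; vm_compute; reflexivity|]).
move/eqP->; apply: gen => //; vm_compute; reflexivity.
Qed.
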